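(* Let $m,n\in\frac1T\mathbb N$. For homogeneous $a,b\in V$, $i\in\mathbb Q$ and $j\in\mathbb Z$, $$\mathrm{Res}_x(1+x)^ix^jY(b,x)a\equiv(-1)^{j+1}\mathrm{Res}_x(1+x)^{\mathrm{wt}\,a+\mathrm{wt}\,b+m-n-2-i-j}x^jY(a,x)b\pmod{O^T_{0,n,m}(V)}.$$
   Context: $T$ is a positive integer and $V$ is a vertex algebra (vertex operator $Y(a,x)=\sum_{i\in\mathbb Z}a_ix^{-i-1}$, vacuum $\mathbf 1$) with a grading $V=\bigoplus_{i\ge\Delta}V_i$, $\Delta\in\mathbb Z_{\le0}$, such that $\mathbf 1\in V_0$ and $a_iV_j\subset V_{\mathrm{wt}a-1-i+j}$ for homogeneous $a$ ($\mathrm{wt}\,a=k$ for $a\in V_k$). $\mathrm{Res}_x$ is the coefficient of $x^{-1}$ and $(1+x)^c$ is the binomial series in nonnegative powers of $x$. $O^T_{0,n,m}(V)$ is the span of $a_{-2}\mathbf 1+(\mathrm{wt}\,a+m-n)a$ over homogeneous $a\in V$. *)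

(* Defs.v *)
From HB Require Import structures.
From mathcomp Require Import all_boot all_order all_algebra.
From Stdlib Require Import ClassicalEpsilon.
Set Implicit Arguments. Unset Strict Implicit. Unset Printing Implicit Defensive.
Import Order.TTheory GRing.Theory Num.Theory.
Local Open Scope ring_scope.

Definition gbin (F : fieldType) (c : F) (k : nat) : F :=
  (\prod_(l < k) (c - l%:R)) / (k`!)%:R.

(* Sum of a finitely supported series  \sum_{k >= 0} f k  (the value is only
   meaningful when f k = 0 for k large, which is always the case below). *)
Definition fsum (V : zmodType) (f : nat -> V) : V :=
  let N := epsilon (inhabits 0%N) (fun N => forall k, (N <= k)%N -> f k = 0) in
  \sum_(k < N) f k.

(* A vertex algebra over F: Y(a,x)b = \sum_i (mode a i b) x^{-i-1},
   axioms: bilinearity, truncation, vacuum axioms, Borcherds identity. *)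
Record vertex_algebra (F : fieldType) (V : lmodType F) := VertexAlgebra {
  mode : V -> int -> V -> V;
  vac : V;
  mode_linl : forall (x : F) a a' i b,
      mode (x *: a + a') i b = x *: mode a i b + mode a' i b;
  mode_linr : forall (x : F) a i b b',
      mode a i (x *: b + b') = x *: mode a i b + mode a i b';
  mode_trunc : forall a b, exists N : int, forall i, N <= i -> mode a i b = 0;
  vac_mode : forall i a, mode vac i a = if i == -1 then a else 0;
  mode_vac_m1 : forall a, mode a (-1) vac = a;
  mode_vac_pos : forall a i, 0 <= i -> mode a i vac = 0;
  borcherds : forall (p q r : int) a b c,
      fsum (fun k : nat => gbin (p%:~R) k *: mode (mode a (r + k%:Z) b) (p + q - k%:Z) c)
      = fsum (fun k : nat => ((-1) ^+ k * gbin (r%:~R) k) *: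
                              mode a (p + r - k%:Z) (mode b (q + k%:Z) c))
        - fsum (fun k : nat => ((-1) ^+ k * (-1) ^ r * gbin (r%:~R) k) *:
                              mode b (q + r - k%:Z) (mode a (p + k%:Z) c))
}.

(* Grading V = \bigoplus_{i >= Delta} V_i, with Vg k the subspace V_k,
   1 \in V_0 and a_i V_j \subset V_{wt a - 1 - i + j}. *)
Record is_grading (F : fieldType) (V : lmodType F) (VA : vertex_algebra V)
    (Vg : int -> V -> Prop) (Delta : int) : Prop := IsGrading {
  gr_sub0 : forall k, Vg k 0;
  gr_subD : forall k (x : F) u v, Vg k u -> Vg k v -> Vg k (x *: u + v);
  gr_low : forall k v, k < Delta -> Vg k v -> v = 0;
  gr_span : forall v, exists (s : seq int) (f : int -> V),
      uniq s /\ (forall k, Vg k (f k)) /\ v = \sum_(k <- s) f k;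
  gr_indep : forall (s : seq int) (f : int -> V),
      uniq s -> (forall k, Vg k (f k)) -> \sum_(k <- s) f k = 0 ->
      forall k, k \in s -> f k = 0;
  gr_vac : Vg 0 (vac VA);
  gr_mode : forall ka kb a b i, Vg ka a -> Vg kb b ->
      Vg (ka - 1 - i + kb) (mode VA a i b)
}.

(* Membership in O^T_{0,n,m}(V): linear span of a_{-2}1 + (wt a + m - n) a,
   a homogeneous (a \in V_k, wt a = k). *)
Definition inO (F : fieldType) (V : lmodType F) (VA : vertex_algebra V)
    (Vg : int -> V -> Prop) (m n : rat) (v : V) : Prop :=
  exists s : seq (F * int * V),
    (forall t, t \in s -> Vg t.1.2 t.2) /\
    v = \sum_(t <- s) t.1.1 *: (mode VA t.2 (-2) (vac VA)
                                 + ratr (t.1.2%:~R + m - n) *: t.2).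

(* Res_x (1+x)^c x^j Y(b,x) a  =  \sum_{k>=0} binom(c,k) b_{j+k} a *)
Definition resY (F : fieldType) (V : lmodType F) (VA : vertex_algebra V)
    (c : F) (j : int) (b a : V) : V :=
  fsum (fun k : nat => gbin c k *: mode VA b (j + k%:Z) a).

(* Main.v *)
Require Import Defs.
From HB Require Import structures.
From mathcomp Require Import all_boot all_order all_algebra zify ring.
From Stdlib Require Import ClassicalEpsilon.
Import Order.TTheory GRing.Theory Num.Theory.
Local Open Scope ring_scope.

Section G.
Variable F : fieldType.
Hypothesis charF : [pchar F] =i pred0.

Lemma nat_neq0 (k : nat) : (k.+1)%:R != 0 :> F.
Proof. by have /pcharf0P -> := charF. Qed.

Lemma fact_neq0 (k : nat) : (k`!)%:R != 0 :> F.
Proof. by have /pcharf0P -> := charF; rewrite -lt0n fact_gt0. Qed.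

Lemma gbin0 (x : F) : gbin x 0 = 1.
Proof. by rewrite /gbin big_ord0 fact0 divr1. Qed.

Lemma gbin1 (x : F) : gbin x 1 = x.
Proof. by rewrite /gbin big_ord1 subr0 divr1. Qed.

Lemma gbinSr (x : F) k : gbin x k.+1 * k.+1%:R = gbin x k * (x - k%:R).
Proof.
rewrite /gbin big_ord_recr /= factS natrM invfM.
have := nat_neq0 k; have := fact_neq0 k => h1 h2.
field. by rewrite h1 addrC natr1.
Qed.

Lemma gbinSl (x : F) k : gbin x k.+1 = x / k.+1%:R * gbin (x - 1) k.
Proof.
rewrite /gbin big_ord_recl /= subr0 factS natrM invfM.
rewrite (eq_bigr (fun l : 'I_k => x - 1 - l%:R)); last first.
  by move=> l _; rewrite /bump /= add1n -natr1 opprD addrAC addrA.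
have := nat_neq0 k; have := fact_neq0 k => h1 h2.
field. by rewrite h1 addrC natr1.
Qed.

Lemma gbinN1 k : gbin (-1) k = (-1) ^+ k :> F.
Proof.
rewrite /gbin.
have -> : \prod_(l < k) (-1 - l%:R) = (-1) ^+ k * (k`!)%:R :> F.
  elim: k => [|k IH]; first by rewrite big_ord0 fact0 expr0 mulr1.
  rewrite big_ord_recr /= IH factS natrM exprS.
  rewrite -[k.+1]addn1 natrD. 
  ring.
by rewrite mulfK ?fact_neq0.
Qed.

Lemma gbin_refl (x : F) s : (-1) ^+ s * gbin x s = gbin (s%:R - 1 - x) s.
Proof.
rewrite /gbin mulrA; congr (_ * _).
rewrite [RHS](reindex_inj rev_ord_inj) /=.
rewrite -[s in (-1) ^+ s]card_ord -prodrN.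
apply: eq_bigr => l _.
rewrite natrB ?ltn_ord // -natr1. ring.
Qed.
Lemma vander (x y : F) s :
  \sum_(k < s.+1) gbin x k * gbin y (s - k) = gbin (x + y) s.
Proof.
elim: s => [|s IH]; first by rewrite big_ord1 !gbin0 mulr1.
apply: (mulIf (nat_neq0 s)). rewrite gbinSr -IH mulr_suml.
transitivity (\sum_(k < s.+2) (gbin x k * gbin y (s.+1 - k) * k%:R
    + gbin x k * gbin y (s.+1 - k) * (s.+1 - k)%:R)).
  by apply: eq_bigr => k _; rewrite -mulrDr -natrD subnKC // -ltnS.
rewrite big_split /= [X in X + _]big_ord_recl [X in _ + X]big_ord_recr /= subnn !mulr0 add0r addr0.
rewrite -big_split mulr_suml; apply: eq_bigr => k _ /=.
have hk : (k <= s)%N by rewrite -ltnS.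
rewrite /bump /= add1n subSS subSn //.
transitivity ((gbin x k.+1 * k.+1%:R) * gbin y (s-k)
   + gbin x k * (gbin y (s-k).+1 * (s-k).+1%:R)); first by ring.
rewrite !gbinSr natrB //; ring.
Qed.
Lemma nz_den (x : rat) : (denq x)%:~R != 0 :> F.
Proof.
have := denq_gt0 x; case: (denq x) => // d hd.
by have /pcharf0P -> := charF; rewrite -lt0n.
Qed.

Lemma ratrB (x y : rat) : ratr (x - y) = ratr x - ratr y :> F.
Proof.
have injZtoQ: @injective rat int intr by apply: intr_inj.
apply: (canLR (mulfK (nz_den _))); apply: (mulIf (nz_den x)).
rewrite mulrAC mulrBl divfK ?nz_den // mulrAC -!rmorphM.
apply: (mulIf (nz_den y)); rewrite mulrAC mulrBl divfK ?nz_den //.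
rewrite -!(rmorphM, rmorphB); congr _%:~R; apply: injZtoQ.
rewrite !(rmorphM, rmorphB) /= [_ - _]lock /= -lock !numqE.
by rewrite (mulrAC y) -!mulrBl -mulrA mulrAC !mulrA.
Qed.

Lemma ratr0 : ratr 0 = 0 :> F.
Proof. exact: (ratr_int F 0). Qed.

Lemma ratrN (x : rat) : ratr (- x) = - ratr x :> F.
Proof. by rewrite -sub0r ratrB ratr0 sub0r. Qed.

Lemma ratrD (x y : rat) : ratr (x + y) = ratr x + ratr y :> F.
Proof. have -> : x + y = x - (- y) by rewrite opprK. by rewrite ratrB ratrN opprK. Qed.
End G.

Section S.
Variable V : zmodType.

Lemma sum_extend (f : nat -> V) N M : (N <= M)%N -> (forall k, (N <= k)%N -> f k = 0) ->
  \sum_(k < M) f k = \sum_(k < N) f k.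
Proof.
move=> hNM hf; rewrite [RHS](big_ord_widen _ _ hNM).
by rewrite [RHS]big_mkcond /=; apply: eq_bigr => k _; case: ltnP => // /hf ->.
Qed.

Lemma fsum_eq (f : nat -> V) N : (forall k, (N <= k)%N -> f k = 0) ->
  fsum f = \sum_(k < N) f k.
Proof.
move=> hf; rewrite /fsum.
set N0 := epsilon _ _.
have h0 : forall k, (N0 <= k)%N -> f k = 0.
  by apply: (epsilon_spec _ (fun N => forall k, (N <= k)%N -> f k = 0)); exists N.
by rewrite -(@sum_extend f _ _ (leq_maxl N0 N) h0) -(@sum_extend f _ _ (leq_maxr N0 N) hf).
Qed.

Lemma sum_ind (X : V) M (c : nat) : \sum_(s < M) (if (s : nat) == c then X else 0) = if (c < M)%N then X else 0.
Proof.
elim: M => [|M IH]; first by rewrite big_ord0 ltn0.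
rewrite big_ord_recr /= IH ltnS.
by case: (ltngtP c M) => h; rewrite ?addr0 ?add0r.
Qed.

Lemma tri M (H : nat -> nat -> V) : (forall k l, (M <= k + l)%N -> H k l = 0) ->
  \sum_(k < M) \sum_(l < M) H k l = \sum_(s < M) \sum_(k < s.+1) H k (s - k)%N.
Proof.
move=> hH.
transitivity (\sum_(k < M) \sum_(l < M) \sum_(s < M) (if (s : nat) == (k + l)%N then H k l else 0)).
  apply: eq_bigr => k _; apply: eq_bigr => l _; rewrite sum_ind.
  by case: ltnP => // /hH ->.
under eq_bigr => k _ do rewrite exchange_big.
rewrite exchange_big /=; apply: eq_bigr => s _.
rewrite (@big_ord_widen _ 0 +%R s.+1 M (fun k => H k (s - k)%N) (ltn_ord s)) [RHS]big_mkcond /=.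
apply: eq_bigr => k _.
transitivity (\sum_(l < M) (if (l : nat) == (s - k)%N then (if (k <= s)%N then H k (s - k)%N else 0) else 0)).
  apply: eq_bigr => l _.
  case: (eqVneq (s : nat) (k + l)%N) => [->|hne].
    by rewrite addKn eqxx leq_addr.
  case: (eqVneq (l : nat) (s - k)%N) => // hl.
  case: leqP => // hks; exfalso; move/eqP: hne; apply; lia.
rewrite sum_ind ltnS.
have hs := ltn_ord s.
case: leqP => // hks; rewrite ifT //; lia.
Qed.
End S.


Section C.
Variables (F : fieldType) (V : lmodType F) (VA : vertex_algebra V)
  (Vg : int -> V -> Prop) (m n : rat).
Hypothesis charF : [pchar F] =i pred0.
Variable Delta : int.
Hypothesis hgr : is_grading VA Vg Delta.
Local Notation md := (mode VA).
Local Notation vc := (vac VA).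
Local Notation O := (inO VA Vg m n).

Lemma mode0l i b : md 0 i b = 0.
Proof.
have := mode_linl VA 1 0 0 i b; rewrite scaler0 addr0 scale1r => h.
by apply: (addrI (md 0 i b)); rewrite addr0 -h.
Qed.

Lemma mode0r a i : md a i 0 = 0.
Proof.
have := mode_linr VA 1 a i 0 0; rewrite scaler0 addr0 scale1r => h.
by apply: (addrI (md a i 0)); rewrite addr0 -h.
Qed.

Lemma O0 : O 0.
Proof. by exists [::]; split => //; rewrite big_nil. Qed.

Lemma OD u v : O u -> O v -> O (u + v).
Proof.
move=> [s1 [h1 ->]] [s2 [h2 ->]]; exists (s1 ++ s2); split; last by rewrite big_cat.
by move=> t; rewrite mem_cat => /orP [/h1|/h2].
Qed.

Lemma OZ (x : F) u : O u -> O (x *: u).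
Proof.
move=> [s [h ->]]; exists [seq (x * t.1.1, t.1.2, t.2) | t <- s]; split.
  by move=> t /mapP [t' /h ht ->].
by rewrite big_map scaler_sumr; apply: eq_bigr => t _; rewrite scalerA.
Qed.

Lemma OB u v : O u -> O v -> O (u - v).
Proof. by move=> hu hv; apply: OD => //; rewrite -scaleN1r; apply: OZ. Qed.

Lemma Ogen w c : Vg w c -> O (md c (-2) vc + ratr (w%:~R + m - n) *: c).
Proof.
move=> h; exists [:: (1, w, c)]; split; first by move=> t; rewrite inE => /eqP ->.
by rewrite big_seq1 scale1r.
Qed.

Lemma Osum M (f g : nat -> V) : (forall k, O (f k - g k)) ->
  O (\sum_(k < M) f k - \sum_(k < M) g k).
Proof.
move=> h; rewrite -sumrB; apply: (big_ind O) => //; first exact: O0.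
exact: OD.
Qed.

Lemma Emode c k : md (md c (-2) vc) (- 1 - k%:Z) vc = (k.+1)%:R *: md c (-2 - k%:Z) vc.
Proof.
have := borcherds VA (-1 - k%:Z) 0 (-2) c vc vc.
rewrite (@fsum_eq _ _ 2); last first.
  move=> k' hk; rewrite (mode_vac_pos VA c) ?mode0l ?scaler0 //; lia.
rewrite (@fsum_eq _ _ 0); last first.
  move=> k' _; rewrite vac_mode (_ : (0 + k'%:Z == -1) = false) ?mode0r ?scaler0 //; apply/eqP; lia.
rewrite (@fsum_eq _ _ 0); last first.
  move=> k' _; rewrite vac_mode (_ : (0 - 2 - k'%:Z == -1) = false) ?scaler0 //; apply/eqP; lia.
rewrite !big_ord0 subr0 big_ord_recr big_ord1 /= gbin0 gbin1 scale1r.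
rewrite mode_vac_m1 addr0 !subr0.
have -> : -1 - k%:Z - 1 = -2 - k%:Z by lia.
have -> : -1 - k%:Z = - (k.+1)%:Z by lia.
by rewrite intrN scaleNr => /eqP; rewrite addr_eq0 opprK => /eqP ->.
Qed.
Lemma skew a b r M : (forall k, (M <= k)%N -> md a (r + k%:Z) b = 0) ->
  md b r a = \sum_(k < M) ((-1) ^ (r + 1) * (-1) ^+ k) *:
                 md (md a (r + k%:Z) b) (-1 - k%:Z) vc.
Proof.
move=> hM.
have := borcherds VA (-1) 0 r a b vc.
rewrite (@fsum_eq _ _ M); last by move=> k hk; rewrite hM ?mode0l ?scaler0.
rewrite (@fsum_eq _ _ 0); last first.
  by move=> k _; rewrite (mode_vac_pos VA b) ?mode0r ?scaler0 //; lia.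
rewrite (@fsum_eq _ _ 1); last first.
  by move=> k hk; rewrite (mode_vac_pos VA a) ?mode0r ?scaler0 //; lia.
rewrite big_ord0 big_ord1 sub0r /= expr0 mul1r gbin0 mulr1.
have -> : 0 + r - 0%:Z = r by lia.
have -> : -1 + 0%:Z = -1 by lia.
rewrite mode_vac_m1 => h.
have e : (-1) ^ (r + 1) *: \sum_(k < M) (-1) ^+ k *: md (md a (r + k%:Z) b) (-1 - k%:Z) vc = md b r a.
  have hN : (-1)%:~R = -1 :> F by rewrite intrN.
  have ee : (-1) ^ r * (-1) ^ r = 1 :> F.
    by rewrite -exprzMl ?unitrN1 // mulrNN mulr1 exp1rz.
  have h' : \sum_(k < M) (-1) ^+ k *: md (md a (r + k%:Z) b) (-1 - k%:Z) vc
      = - ((-1) ^ r *: md b r a).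
    by rewrite -h; apply: eq_bigr => k _; rewrite hN gbinN1.
  rewrite h' expfzDr ?oppr_eq0 ?oner_eq0 // expr1z scalerN scalerA.
  by rewrite -scaleNr mulrN1 mulNr opprK ee scale1r.
rewrite -e scaler_sumr; apply: eq_bigr => k _; by rewrite scalerA.
Qed.
Lemma Ered k : forall w c, Vg w c ->
  O (md c (-1 - k%:Z) vc - gbin (- ratr (w%:~R + m - n)) k *: c).
Proof.
elim: k => [|k IH] w c hc.
  by rewrite subr0 mode_vac_m1 gbin0 scale1r subrr; exact: O0.
have hD : Vg (w + 1) (md c (-2) vc).
  have := gr_mode hgr (-2) hc (gr_vac hgr).
  by have -> : w - 1 - (-2) + 0 = w + 1 by lia.
have h1 := IH _ _ hD.
have h2 := @Ogen w c hc.
set K := ratr (w%:~R + m - n) in h2 *.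
have eK : ratr ((w + 1)%:~R + m - n) = K + 1 :> F.
  have -> : (w + 1)%:~R + m - n = (w%:~R + m - n) + 1 by rewrite intrD; ring.
  by rewrite ratrD // (ratr_int F 1).
rewrite eK in h1.
have -> : md c (-1 - k.+1%:Z) vc - gbin (-K) k.+1 *: c = (k.+1%:R)^-1 *:
   ((md (md c (-2) vc) (-1 - k%:Z) vc - gbin (-(K+1)) k *: md c (-2) vc)
     + gbin (-(K+1)) k *: (md c (-2) vc + K *: c)).
  rewrite Emode gbinSl // !scalerDr scalerN !scalerA mulVf ?nat_neq0 // scale1r.
  rewrite addrA subrK.
  have -> : -1 - k.+1%:Z = -2 - k%:Z by lia.
  rewrite -scaleNr opprD; congr (_ + _ *: _).
  have := @nat_neq0 F charF k => hk. rewrite opprD. field.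
  by rewrite addrC natr1.
by apply: OZ; apply: OD => //; apply: OZ.
Qed.
End C.


Theorem mainTheorem8 (F : fieldType) (charF : [pchar F] =i pred0)
    (V : lmodType F) (VA : vertex_algebra V)
    (Vg : int -> V -> Prop) (Delta : int) (hDelta : Delta <= 0)
    (hgr : is_grading VA Vg Delta)
    (T : nat) (hT : (0 < T)%N) (mT nT : nat)
    (a b : V) (wta wtb : int) (ha : Vg wta a) (hb : Vg wtb b)
    (i : rat) (j : int) :
  let m : rat := mT%:R / T%:R in
  let n : rat := nT%:R / T%:R in
  inO VA Vg m n
    (resY VA (ratr i) j b a
     - ((-1) ^ (j + 1) : F) *:
         resY VA (ratr (wta%:~R + wtb%:~R + m - n - 2 - i - j%:~R)) j a b).
Proof.
move=> m n.
have [Nab hab] := mode_trunc VA a b.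
have [Nba hba] := mode_trunc VA b a.
set M : nat := (`|Nab - j| + `|Nba - j|)%N.
have hMab : forall k, (M <= k)%N -> mode VA a (j + k%:Z) b = 0.
  by move=> k hk; apply: hab; lia.
have hMba : forall k, (M <= k)%N -> mode VA b (j + k%:Z) a = 0.
  by move=> k hk; apply: hba; lia.
set C := ratr (wta%:~R + wtb%:~R + m - n - 2 - i - j%:~R).
rewrite /resY (@fsum_eq _ _ M); last by move=> k hk; rewrite hMba // scaler0.
rewrite (@fsum_eq _ _ M); last by move=> k hk; rewrite hMab // scaler0.
pose w (s : nat) : int := wta - 1 - (j + s%:Z) + wtb.
have hw : forall s : nat, Vg (w s) (mode VA a (j + s%:Z) b).
  by move=> s; apply: (gr_mode hgr).
pose kap (s : nat) : F := ratr ((w s)%:~R + m - n).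
pose H (k l : nat) : V := (gbin (ratr i) k * ((-1) ^ (j + k%:Z + 1) * (-1) ^+ l)) *:
   (gbin (- kap (k + l)%N) l *: mode VA a (j + (k + l)%N%:Z) b).
have stepA : inO VA Vg m n (\sum_(k < M) gbin (ratr i) k *: mode VA b (j + k%:Z) a
                  - \sum_(k < M) \sum_(l < M) H k l).
  apply: (@Osum F V VA Vg m n M (fun k => gbin (ratr i) k *: mode VA b (j + k%:Z) a) (fun k => \sum_(l < M) H k l)) => k.
  rewrite (@skew F V VA charF a b (j + k%:Z) M); last first.
    by move=> l hl; have := hMab (k + l)%N; rewrite PoszD addrA; apply; lia.
  rewrite scaler_sumr -sumrB; apply: (big_ind (inO VA Vg m n)).
  - exact: O0.
  - exact: OD.
  move=> l _; rewrite /H [X in X - _]scalerA -scalerBr; apply: OZ.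
  have -> : j + k%:Z + l%:Z = j + (k + l)%N%:Z by rewrite PoszD addrA.
  exact: (@Ered F V VA Vg m n charF Delta hgr l _ _ (hw (k + l)%N)).
have eX : \sum_(k < M) \sum_(l < M) H k l =
    (-1) ^ (j + 1) *: \sum_(s < M) gbin C s *: mode VA a (j + s%:Z) b.
  rewrite (@tri V M H); last first.
    by move=> k l hkl; rewrite /H (hMab (k + l)%N) ?scaler0.
  rewrite scaler_sumr; apply: eq_bigr => s _.
  have e1 : forall k : 'I_s.+1, H k (s - k)%N =
      (((-1) ^ (j + 1) * (-1) ^+ s) * (gbin (ratr i) k * gbin (- kap s) (s - k)%N))
        *: mode VA a (j + s%:Z) b.
    move=> k; have hk : (k <= s)%N by rewrite -ltnS.
    rewrite /H subnKC // scalerA; congr (_ *: _).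
    have -> : j + k%:Z + 1 = (j + 1) + k%:Z by ring.
    rewrite expfzDr ?oppr_eq0 ?oner_eq0 //.
    have -> : (-1) ^+ s = (-1) ^+ k * (-1) ^+ (s - k)%N :> F by rewrite -exprD subnKC.
    by change ((-1) ^ k%:Z) with ((-1) ^+ k : F); ring.
  rewrite (eq_bigr _ (fun k _ => e1 k)) -scaler_suml -mulr_sumr vander //.
  rewrite scalerA -mulrA gbin_refl //.
  congr (_ * gbin _ _ *: _).
  rewrite /C /kap /w.
  have -> : (wta%:~R + wtb%:~R + m - n - 2 - i - j%:~R : rat) =
      (s%:R - 1) - (i - ((wta - 1 - (j + s%:Z) + wtb)%:~R + m - n)).
    by rewrite !(intrD, intrB) /=; ring.
  have r1 : ratr 1 = 1 :> F := ratr_int F 1.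
  by rewrite !(@ratrB F charF) (ratr_nat F s) r1.
rewrite -eX; exact: stepA.
Qed.
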